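(* Let $G$ be a finite directed graph and $R\subseteq V(G)$. Then $\mathrm{DT}_R(G)$ is shellable.
   Context: A directed forest in $G$ is a set of edges of $G$ which, viewed as a graph on $V(G)$, is acyclic and has at most one edge directed to each vertex; its roots are the vertices of $V(G)$ with no edge of the forest directed to them. $\mathrm{DT}(G)$ is the simplicial complex with vertex set $E(G)$ whose simplices are the directed forests. $\mathrm{DT}_R(G)\subseteq \mathrm{DT}(G)$ is the subcomplex generated by the faces of $\mathrm{DT}(G)$ that are edge sets of directed forests with root set exactly $R$. A simplicial complex $\Delta$ is shellable if its maximal faces can be ordered $F_1,\dots,F_n$ such that for all $1\le i<k\le n$ there exist $1\le j<k$ and $e\in F_k$ with $F_i\cap F_k\subseteq F_j\cap F_k=F_k\setminus\{e\}$. *)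

(* Defs.v *)
From mathcomp Require Import all_boot.
Set Implicit Arguments. Unset Strict Implicit. Unset Printing Implicit Defensive.

(* A finite directed graph G is a finite vertex type V together with an
   edge set E : {set V * V}; the edge (u, v) is directed from u to v. *)

Section DirTree.
Variable V : finType.

Definition joins (e : V * V) (x y : V) : bool := (e == (x, y)) || (e == (y, x)).

(* F, viewed as an (undirected) graph on V, contains a cycle: distinct
   vertices v_0,...,v_{k-1} (k >= 1) and distinct edges e_0,...,e_{k-1} of F
   with e_i joining v_i and v_{i+1 mod k}.  (k = 1: a loop; k = 2: two
   antiparallel edges.) *)
Definition has_cycle (F : {set V * V}) : Prop :=
  exists (vs : seq V) (es : seq (V * V)),
    [/\ 0 < size vs, size es = size vs, uniq vs & uniq es] /\
    all (fun e => e \in F) es /\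
        forall (x0 : V) (e0 : V * V) (i : nat), i < size vs ->
          joins (nth e0 es i) (nth x0 vs i) (nth x0 vs ((i.+1) %% size vs)).

Definition is_dforest (E F : {set V * V}) : Prop :=
  [/\ F \subset E,
      forall v : V, #|[set e in F | e.2 == v]| <= 1 &
      ~ has_cycle F].

Definition roots (F : {set V * V}) : {set V} :=
  [set v : V | [forall e in F, e.2 != v]].

Definition DT_R (E : {set V * V}) (R : {set V}) : {set V * V} -> Prop :=
  fun S => exists F : {set V * V}, [/\ is_dforest E F, roots F = R & S \subset F].
End DirTree.

(* Abstract simplicial complexes on a finite ground type, given by their
   faces as a predicate. *)
Section Shell.
Variable T : finType.

Definition is_facet (D : {set T} -> Prop) (F : {set T}) : Prop :=
  D F /\ forall F' : {set T}, D F' -> F \subset F' -> F' = F.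

(* shellable: the maximal faces can be listed F_1,...,F_n (each exactly once)
   so that for all i < k there are j < k and e \in F_k with
   F_i :&: F_k \subset F_j :&: F_k = F_k :\ e. (0-based indices here.) *)
Definition shellable (D : {set T} -> Prop) : Prop :=
  exists s : seq {set T},
    [/\ uniq s,
        forall F : {set T}, F \in s <-> is_facet D F &
        forall i k : nat, i < k -> k < size s ->
          exists j : nat, j < k /\ exists e : T,
            [/\ e \in nth set0 s k,
                nth set0 s i :&: nth set0 s k \subset nth set0 s j :&: nth set0 s k &
                nth set0 s j :&: nth set0 s k = nth set0 s k :\ e]].
End Shell.

(* Main.v *)
Require Import Defs.
From mathcomp Require Import all_boot.
From mathcomp Require Import zify.
From Stdlib Require Import ClassicalEpsilon.
Set Implicit Arguments. Unset Strict Implicit. Unset Printing Implicit Defensive.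

Lemma nocycle_pot (V : finType) (F : {set V * V}) (h : V -> nat) :
  (forall x, #|[set e in F | e.2 == x]| <= 1) ->
  (forall e, e \in F -> h e.1 < h e.2) -> ~ has_cycle F.
Proof.
move=> Hdeg Hh [vs [es [[Hn Hsz Hu Heu] [Hall Hj]]]].
have [x0 _] : exists x0 : V, True by case: (vs) Hn => [|x ?] //; exists x.
pose e0 := (x0, x0).
move En: (size vs) => n; rewrite En in Hn Hsz Hj.
case: (@arg_maxnP _ (Ordinal Hn) predT (fun j : 'I_n => h (nth x0 vs j)) isT) => i _ Hi.
pose a := nth x0 vs.
have Hin : forall j, j < n -> nth e0 es j \in F.
  by move=> j Hj'; apply: (allP Hall); apply: mem_nth; rewrite Hsz.
have Hmax : forall j, j < n -> h (a j) <= h (a i).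
  by move=> j Hj'; exact: (Hi (Ordinal Hj')).
pose i1 := i.+1 %% n.
have Hi1 : i1 < n by rewrite ltn_pmod.
have Hj1 := Hj x0 e0 i (ltn_ord i).
have He1 := Hin i (ltn_ord i).
have Hor1 : nth e0 es i = (a i1, a i).
  case/orP: Hj1 => /eqP Hei; last by [].
  by have := Hh _ He1; rewrite Hei /= ltnNge Hmax.
have Hii1 : i1 != i.
  apply/eqP => Heq; have := Hh _ He1; rewrite Hor1 /= Heq ltnn //.
have Hn2 : 1 < n.
  rewrite ltnNge; apply/negP => Hle.
  have Hio := ltn_ord i.
  have Hs : n = 1 by lia.
  have Hi0 : (i : nat) = 0 by lia.
  by move: Hii1; rewrite /i1 Hi0 {1}Hs.
pose i' := if (i : nat) == 0 then n.-1 else (i : nat).-1.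
have Hio := ltn_ord i.
have Hi' : i' < n by rewrite /i'; case: ifP => _; lia.
have Hi'1 : i'.+1 %% n = i.
  rewrite /i'; case: ifP => [/eqP ->|/negbT Hnz].
    by rewrite prednK ?modnn // ltnW.
  by rewrite prednK ?modn_small // lt0n.
have Hi'i : i' != i by rewrite /i'; case: ifP => [/eqP->|/negbT]; lia.
have Hj2 := Hj x0 e0 i' Hi'.
rewrite Hi'1 in Hj2.
have He2 := Hin i' Hi'.
have Hor2 : nth e0 es i' = (a i', a i).
  case/orP: Hj2 => /eqP Hei; first by [].
  by have := Hh _ He2; rewrite Hei /= ltnNge Hmax.
have Hne : nth e0 es i != nth e0 es i'.
  by rewrite nth_uniq // ?Hsz // eq_sym.
have := Hdeg (a i).
have : [set nth e0 es i; nth e0 es i'] \subset [set e in F | e.2 == a i].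
  apply/subsetP => e; rewrite !inE => /orP [] /eqP ->.
    by rewrite He1 Hor1 /=.
  by rewrite He2 Hor2 /=.
move/subset_leq_card; rewrite cards2 Hne => H1 H2.
by have := leq_trans H1 H2.
Qed.

Definition par (V : finType) (T : {set V * V}) (v : V) : V :=
  if [pick e in T | e.2 == v] is Some e then e.1 else v.

Definition isF (V : finType) (E : {set V * V}) (R : {set V}) (T : {set V * V}) : Prop :=
  is_dforest E T /\ Defs.roots T = R.

Lemma inR_iff (V : finType) (E : {set V * V}) R T v : isF E R T ->
  (v \in R) = [forall e in T, e.2 != v].
Proof. by case=> _ <-; rewrite inE. Qed.

Lemma in_uniqF (V : finType) (E : {set V * V}) R T e e' : isF E R T ->
  e \in T -> e' \in T -> e.2 = e'.2 -> e = e'.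
Proof.
case=> [[_ Hdeg _] _] He He' H2.
have /card_le1_eqP := Hdeg e.2.
by apply; rewrite !inE ?He ?He' ?H2 ?eqxx.
Qed.

Lemma in_notR (V : finType) (E : {set V * V}) R T e : isF E R T ->
  e \in T -> e.2 \notin R.
Proof.
move=> HT He; rewrite (inR_iff _ HT); apply/negP => /forall_inP /(_ e He).
by rewrite eqxx.
Qed.

Lemma notR_in (V : finType) (E : {set V * V}) R T v : isF E R T ->
  v \notin R -> (par T v, v) \in T.
Proof.
move=> HT; rewrite (inR_iff _ HT) negb_forall_in => /existsP [e /andP [He /negPn /eqP Hv]].
rewrite /par; case: pickP => [e' /andP [He' /eqP <-]|/(_ e)]; first by case: e' He'.
by rewrite He Hv eqxx.
Qed.

Lemma inR_par (V : finType) (E : {set V * V}) R T v : isF E R T ->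
  v \in R -> par T v = v.
Proof.
move=> HT; rewrite (inR_iff _ HT) => /forall_inP Hv.
rewrite /par; case: pickP => [e' /andP [He' /eqP Hv']|] //.
by have := Hv _ He'; rewrite Hv' eqxx.
Qed.

Lemma in_par (V : finType) (E : {set V * V}) R T e : isF E R T ->
  e \in T -> e = (par T e.2, e.2).
Proof.
move=> HT He; apply: (in_uniqF HT) => //.
exact: (notR_in HT (in_notR HT He)).
Qed.

Lemma par_eq (V : finType) (E : {set V * V}) R T x y : isF E R T ->
  (y, x) \in T -> par T x = y.
Proof. by move=> HT /(in_par HT) [] ->. Qed.

Fixpoint depn (V : finType) (p : V -> V) (R : {set V}) (n : nat) (v : V) : nat :=
  if n is n'.+1 then (if v \in R then 0 else (depn p R n' (p v)).+1) else 0.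

Definition dep (V : finType) (R : {set V}) (T : {set V * V}) (v : V) : nat :=
  depn (par T) R #|V|.+1 v.

Lemma depn_stable (V : finType) (p : V -> V) (R : {set V}) k v n m :
  iter k p v \in R -> k <= n -> k <= m -> depn p R n v = depn p R m v.
Proof.
elim: k v n m => [|k IH] v [|n] [|m] //=.
- by move=> ->.
- by move=> ->.
- by move=> ->.
move=> Hv Hn Hm; have Hv' : iter k p (p v) \in R by rewrite -iterSr.
case: ifP => // _; congr S; exact: IH Hv' Hn Hm.
Qed.

Lemma hit (V : finType) (E : {set V * V}) R T v : isF E R T ->
  exists2 k, k <= #|V| & iter k (par T) v \in R.
Proof.
move=> HT.
case: (boolP [exists k : 'I_#|V|.+1, iter k (par T) v \in R]) => [/existsP [k Hk]|Hno].
  by exists k; [rewrite -ltnS ltn_ord|].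
exfalso.
have Hno' : forall k, k <= #|V| -> iter k (par T) v \notin R.
  move=> k Hk; apply: contra Hno => Hk'; apply/existsP.
  by exists (Ordinal (Hk : k < #|V|.+1)).
have : ~~ uniq (traject (par T) v #|V|.+1).
  apply/negP => /card_uniqP; rewrite size_traject => Hc.
  by have := max_card (mem (traject (par T) v #|V|.+1)); rewrite Hc ltnn.
rewrite looping_uniq negbK /looping => /trajectP [i Hi Heq].
pose x := iter i (par T) v.
have xR : x \notin R by apply: Hno'; exact: ltnW.
have [k Hk] : exists k, iter k.+1 (par T) x = x.
  have Hi0 : 0 < #|V| - i by rewrite subn_gt0; exact: Hi.
  case Ek: (#|V| - i) Hi0 => [|k] // _; exists k.
  rewrite -Ek /x -iterD (subnK (ltnW Hi)); exact: Heq.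
have Hord : iter (order (par T) x) (par T) x = x.
  exact: ((@orbitPcycle _ (par T) x 3 4).1 (ex_intro _ _ Hk)).
have Hnr : forall t, t < order (par T) x -> iter t (par T) x \notin R.
  move=> t Ht; apply/negP => HtR.
  have := iter_fix (order (par T) x - t) (inR_par HT HtR).
  rewrite -iterD (subnK (ltnW Ht)) Hord => Hx; move: xR; by rewrite Hx HtR.
have [[_ _ Hnc] _] := HT; apply: Hnc.
exists (orbit (par T) x), (map (fun y => (par T y, y)) (orbit (par T) x)).
split; first split.
- by have := in_orbit (par T) x; case: (orbit _ x).
- by rewrite size_map.
- exact: orbit_uniq.
- by rewrite map_inj_uniq ?orbit_uniq // => y1 y2 [].
split.
  apply/allP => e /mapP [y /trajectP [t Ht ->] ->].
  exact: (notR_in HT (Hnr t Ht)).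
move=> x0 e0 i' Hi'; rewrite size_orbit in Hi'.
rewrite (nth_map x0) ?size_orbit // /orbit.
rewrite (set_nth_default x) ?size_traject // nth_traject //.
rewrite (set_nth_default x) ?size_traject ?ltn_pmod // nth_traject ?ltn_pmod //.
have -> : iter (i'.+1 %% order (par T) x) (par T) x = par T (iter i' (par T) x).
  rewrite -iterS; have := Hi'; rewrite leq_eqVlt => /orP [/eqP Heq'|Hlt].
    by rewrite Heq' modnn /= Hord.
  by rewrite modn_small.
by rewrite /joins eqxx orbT.
Qed.

Lemma dep_R (V : finType) (E : {set V * V}) R T v : isF E R T -> v \in R -> dep R T v = 0.
Proof. by move=> _ Hv; rewrite /dep /= Hv. Qed.

Lemma dep_notR (V : finType) (E : {set V * V}) R T v : isF E R T -> v \notin R ->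
  dep R T v = (dep R T (par T v)).+1.
Proof.
move=> HT Hv; rewrite {1}/dep /= (negbTE Hv); congr S.
have [k Hk HkR] := @hit _ E R T v HT.
case: k Hk HkR => [|k] Hk HkR; first by rewrite /= in HkR; rewrite HkR in Hv.
have HkR' : iter k (par T) (par T v) \in R by rewrite -iterSr.
apply: (depn_stable HkR'); [exact: ltnW Hk | exact: leqW (ltnW Hk)].
Qed.

Lemma dep_lt (V : finType) (E : {set V * V}) R T e : isF E R T -> e \in T ->
  dep R T e.1 < dep R T e.2.
Proof.
move=> HT He; rewrite [e](in_par HT He) /= (dep_notR HT (in_notR HT He)) //.
Qed.

Lemma exch (V : finType) (E : {set V * V}) (R : {set V}) T u v :
  isF E R T -> v \notin R -> (u, v) \in E -> dep R T u < dep R T v ->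
  let T' := (T :\ (par T v, v)) :|: [set (u, v)] in
  [/\ isF E R T', forall x, x \notin R -> par T' x = (if x == v then u else par T x),
      forall x, dep R T' x <= dep R T x & dep R T' v <= (dep R T u).+1].
Proof.
move=> HT Hv HuvE Hlt T'.
have HTE : T \subset E by case: HT => [[]].
have Hcase : forall e, e \in T' -> e = (u, v) \/ (e \in T /\ e.2 != v).
  move=> e; rewrite !inE => /orP [/andP [Hne HeT]|/eqP ->]; [right|by left].
  split=> //; apply/eqP => He2.
  by move: Hne; rewrite [e in e != _](in_par HT HeT) He2 eqxx.
have HuvT' : (u, v) \in T' by rewrite !inE eqxx orbT.
have HinT' : forall x, x != v -> x \notin R -> (par T x, x) \in T'.
  move=> x Hxv Hx; rewrite !inE (notR_in HT Hx) andbT; apply/orP; left.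
  by apply/eqP => [[_ Exv]]; rewrite Exv eqxx in Hxv.
clearbody T'.
have Hdeg : forall x, #|[set e in T' | e.2 == x]| <= 1.
  move=> x; apply/card_le1_eqP => e1 e2; rewrite !inE => /andP [H1 /eqP E1] /andP [H2 /eqP E2].
  case: (Hcase _ H1) (Hcase _ H2) => [Ee1 | [T1 n1]] [Ee2 | [T2 n2]].
  - by rewrite Ee1 Ee2.
  - by move: n2; rewrite E2 -E1 Ee1 eqxx.
  - by move: n1; rewrite E1 -E2 Ee2 eqxx.
  - by apply: (in_uniqF HT T2 T1); rewrite E1 E2.
have HT'root : Defs.roots T' = R.
  apply/setP => x; rewrite inE (inR_iff _ HT); apply/idP/idP.
  - move=> /forall_inP Hr; rewrite -(inR_iff _ HT); apply/negPn/negP => Hx.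
    case: (eqVneq x v) => [Exv|Hxv].
      by have := Hr _ HuvT'; rewrite Exv eqxx.
    by have := Hr _ (HinT' x Hxv Hx); rewrite eqxx.
  - move=> /forall_inP Hx; apply/forall_inP => e He.
    case: (Hcase _ He) => [-> | [HeT _]] /=; last exact: Hx.
    apply/eqP => Evx; move: Hv; rewrite (inR_iff _ HT) Evx => /negP; apply.
    by apply/forall_inP.
have HT' : isF E R T'.
  split=> //; split=> //.
  - by apply/subsetP => e /Hcase [-> // | [HeT _]]; exact: (subsetP HTE).
  - apply: (@nocycle_pot _ _ (dep R T)) => // e /Hcase [-> // | [HeT _]].
    exact: dep_lt HT HeT.
have Hpar : forall x, x \notin R -> par T' x = (if x == v then u else par T x).
  move=> x Hx; case: eqP => [-> | /eqP Hxv]; first exact: par_eq HT' HuvT'.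
  exact: par_eq HT' (HinT' x Hxv Hx).
have Hdep : forall n x, dep R T x <= n -> dep R T' x <= dep R T x.
  elim=> [|n IH] x Hn.
  - case: (boolP (x \in R)) => Hx; first by rewrite (dep_R HT' Hx).
    by move: Hn; rewrite (dep_notR HT Hx).
  - case: (boolP (x \in R)) => Hx; first by rewrite (dep_R HT' Hx).
    rewrite (dep_notR HT' Hx) (Hpar x Hx).
    case: eqP => [Exv | _].
      subst x.
      have H1 : dep R T u <= n by move: Hn; have := Hlt; lia.
      have := IH u H1; have := Hlt; lia.
    rewrite (dep_notR HT Hx) in Hn *.
    rewrite ltnS; apply: IH; by rewrite -ltnS.
split => //.
- by move=> x; exact: (Hdep _ x (leqnn _)).
- rewrite (dep_notR HT' Hv) (Hpar v Hv) eqxx ltnS; exact: (Hdep _ u (leqnn _)).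
Qed.

Definition Phi (V : finType) (R : {set V}) (T : {set V * V}) : nat := \sum_(x : V) dep R T x.
Definition key2 (V : finType) (R : {set V}) (T : {set V * V}) : nat :=
  \sum_(x in ~: R) (enum_rank (par T x) : nat).
Definition BB (V : finType) : nat := (#|V| * #|V|).+1.
Definition key (V : finType) (R : {set V}) (T : {set V * V}) : nat :=
  Phi R T * BB V + key2 R T.

Lemma key2_lt (V : finType) (R : {set V}) (T : {set V * V}) : key2 R T < BB V.
Proof.
rewrite /key2 /BB ltnS.
apply: (@leq_trans (\sum_(x in ~: R) #|V|)).
  by apply: leq_sum => x _; exact: ltnW (ltn_ord _).
by rewrite sum_nat_const leq_mul2r max_card orbT.
Qed.

Lemma sum_eq_pointwise (I : finType) (P : pred I) (a b : I -> nat) :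
  (forall i, P i -> b i <= a i) -> \sum_(i | P i) a i <= \sum_(i | P i) b i ->
  forall i, P i -> a i = b i.
Proof.
move=> Hab Hs i Pi.
have Hs' : \sum_(i | P i) b i <= \sum_(i | P i) a i by apply: leq_sum.
move: Hs Hs'; rewrite !(bigD1 i Pi) /=.
have : \sum_(j | P j && (j != i)) b j <= \sum_(j | P j && (j != i)) a j.
  by apply: leq_sum => j /andP [Pj _]; exact: Hab.
have := Hab i Pi; lia.
Qed.

Lemma sum_lt (I : finType) (P : pred I) (a b : I -> nat) i :
  (forall j, P j -> a j <= b j) -> P i -> a i < b i ->
  \sum_(j | P j) a j < \sum_(j | P j) b j.
Proof.
move=> Hab Pi Hi; rewrite !(bigD1 i Pi) /=.
have : \sum_(j | P j && (j != i)) a j <= \sum_(j | P j && (j != i)) b j.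
  by apply: leq_sum => j /andP [Pj _]; exact: Hab.
lia.
Qed.

Lemma key_Phi (V : finType) (R : {set V}) A B : key R A <= key R B -> Phi R A <= Phi R B.
Proof.
rewrite /key => H; rewrite leqNgt; apply/negP => Hlt.
have := key2_lt R A; have := key2_lt R B.
have : (Phi R B).+1 * BB V <= Phi R A * BB V by rewrite leq_mul2r Hlt orbT.
rewrite mulSn; lia.
Qed.

Lemma key_lt (V : finType) (R : {set V}) A B : Phi R A <= Phi R B ->
  (Phi R A < Phi R B \/ key2 R A < key2 R B) -> key R A < key R B.
Proof.
rewrite /key => H1 [H2|H2].
  have : (Phi R A).+1 * BB V <= Phi R B * BB V by rewrite leq_mul2r H2 orbT.
  rewrite mulSn; have := key2_lt R A; lia.
have : Phi R A * BB V <= Phi R B * BB V by rewrite leq_mul2r H1 orbT.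
lia.
Qed.

Lemma facet_ext (V : finType) (E : {set V * V}) R A B : isF E R A -> isF E R B ->
  (forall x, x \notin R -> par A x = par B x) -> A = B.
Proof.
move=> HA HB H; apply/setP => e; apply/idP/idP => He.
- have Hn := in_notR HA He.
  by rewrite [e](in_par HA He) H //; exact: notR_in HB Hn.
- have Hn := in_notR HB He.
  by rewrite [e](in_par HB He) -H //; exact: notR_in HA Hn.
Qed.

Lemma main_exch (V : finType) (E : {set V * V}) R Ti Tk :
  isF E R Ti -> isF E R Tk -> Ti != Tk -> key R Ti <= key R Tk ->
  exists v, [/\ v \notin R, par Ti v != par Tk v,
     isF E R ((Tk :\ (par Tk v, v)) :|: [set (par Ti v, v)]) &
     key R ((Tk :\ (par Tk v, v)) :|: [set (par Ti v, v)]) < key R Tk].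
Proof.
move=> Hi Hk Hne Hkey.
have HPhi := key_Phi Hkey.
case: (pickP (fun w => dep R Ti w < dep R Tk w)) => [w0 Hw0 | Hnone].
- case: (@arg_minnP _ w0 (fun w => dep R Ti w < dep R Tk w) (dep R Ti) Hw0) => w Hw Hmin.
  have HwR : w \notin R.
    by apply/negP => HwR; move: Hw; rewrite (dep_R Hi HwR) (dep_R Hk HwR).
  have Hdi : dep R Ti w = (dep R Ti (par Ti w)).+1 := dep_notR Hi HwR.
  have Hku : dep R Tk (par Ti w) <= dep R Ti (par Ti w).
    rewrite leqNgt; apply/negP => Hu; by have := Hmin _ Hu; rewrite Hdi ltnn.
  have HuwE : (par Ti w, w) \in E.
    by have [[HiE _ _] _] := Hi; apply: (subsetP HiE); exact: notR_in Hi HwR.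
  have Hlt : dep R Tk (par Ti w) < dep R Tk w by move: Hw; rewrite Hdi; lia.
  have [HT' Hpar' Hdep' Hdepv] := exch Hk HwR HuwE Hlt.
  exists w; split => //.
  + apply/eqP => Epar; have := dep_notR Hk HwR; rewrite -Epar; move: Hw; rewrite Hdi; lia.
  + apply: key_lt; first by apply: leq_sum => x _; exact: Hdep'.
    left; apply: (@sum_lt _ predT _ _ w); [by move=> x _; exact: Hdep' | by [] |].
    move: Hw Hdepv; rewrite Hdi; lia.
- have Hge : forall w, dep R Tk w <= dep R Ti w.
    by move=> w; rewrite leqNgt; apply/negbT; exact: Hnone w.
  have Hdeq : forall w, dep R Ti w = dep R Tk w.
    move=> w; apply: (@sum_eq_pointwise _ predT (dep R Ti) (dep R Tk)) => //.
  have HPeq : Phi R Ti = Phi R Tk by rewrite /Phi; apply: eq_bigr => w _; exact: Hdeq.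
  have Hk2 : key2 R Ti <= key2 R Tk by move: Hkey; rewrite /key HPeq leq_add2l.
  have [v /andP [HvR Hrk]] : exists v, (v \notin R) && (enum_rank (par Ti v) < enum_rank (par Tk v)).
    case: (pickP (fun v => (v \notin R) && (enum_rank (par Ti v) < enum_rank (par Tk v)))) => [v Hv|Hn].
      by exists v.
    exfalso; apply: (negP Hne); apply/eqP; apply: (facet_ext Hi Hk) => x Hx.
    apply/enum_rank_inj/val_inj.
    apply: (@sum_eq_pointwise _ (fun x => x \in ~: R) (fun x => enum_rank (par Ti x) : nat)
                               (fun x => enum_rank (par Tk x) : nat)) => //.
      by move=> y; rewrite inE => Hy; have := Hn y; rewrite Hy /= => /negbT; rewrite -leqNgt.
    by rewrite inE.
  have HuvE : (par Ti v, v) \in E.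
    by have [[HiE _ _] _] := Hi; apply: (subsetP HiE); exact: notR_in Hi HvR.
  have Hlt : dep R Tk (par Ti v) < dep R Tk v by rewrite -!Hdeq (dep_notR Hi HvR).
  have [HT' Hpar' Hdep' _] := exch Hk HvR HuvE Hlt.
  exists v; split => //.
  + by apply/eqP => E'; move: Hrk; rewrite E' ltnn.
  + apply: key_lt; first by apply: leq_sum => x _; exact: Hdep'.
    right; rewrite /key2; apply: (@sum_lt _ (fun x => x \in ~: R) _ _ v).
    * move=> j; rewrite inE => Hj; rewrite Hpar' //; case: eqP => [->|_] //.
      exact: ltnW.
    * by rewrite inE.
    * by rewrite Hpar' // eqxx.
Qed.

Definition isFb (V : finType) (E : {set V * V}) (R : {set V}) (T : {set V * V}) : bool :=
  if excluded_middle_informative (isF E R T) then true else false.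

Lemma isFbP (V : finType) (E : {set V * V}) (R : {set V}) (T : {set V * V}) :
  isFb E R T <-> isF E R T.
Proof. by rewrite /isFb; case: excluded_middle_informative. Qed.

Lemma facet_max (V : finType) (E : {set V * V}) R F G :
  isF E R F -> isF E R G -> F \subset G -> G = F.
Proof.
move=> HF HG HFG; apply/eqP; rewrite eqEsubset HFG andbT.
apply/subsetP => e He.
have Hn := in_notR HG He.
have H1 := notR_in HF Hn.
by rewrite (in_uniqF HG He (subsetP HFG _ H1)).
Qed.

Lemma facet_iff (V : finType) (E : {set V * V}) R F :
  is_facet (DT_R E R) F <-> isF E R F.
Proof.
split.
- move=> [[G [HG HGR HFG]] Hmax].
  have HG' : isF E R G by split.
  have <- // := Hmax G _ HFG.
  by exists G; split.
- move=> HF; split; first by exists F; case: HF => ? ?; split.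
  move=> F' [G [HG HGR HF'G]] HFF'.
  have HG' : isF E R G by split.
  have EG := facet_max HF HG' (subset_trans HFF' HF'G).
  by apply/eqP; rewrite eqEsubset HFF' andbT -EG.
Qed.

Theorem theorem2p9 (V : finType) (E : {set V * V}) (R : {set V}) :
  shellable (DT_R E R).
Proof.
pose leK := fun A B : {set V * V} => key R A <= key R B.
pose s := sort leK (enum [pred T : {set V * V} | isFb E R T]).
have Huniq : uniq s by rewrite sort_uniq enum_uniq.
have Hmem : forall F, F \in s <-> isF E R F.
  by move=> F; rewrite mem_sort mem_enum inE; exact: isFbP.
have Hsorted : sorted leK s by apply: sort_sorted => A B; exact: leq_total.
have Htr : transitive leK by move=> b a c; exact: leq_trans.
have Hrefl : reflexive leK by move=> a; exact: leqnn.
have Hle : forall i j, i < size s -> j < size s -> i <= j ->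
    key R (nth set0 s i) <= key R (nth set0 s j).
  by move=> i j Hi Hj Hij; exact: (sorted_leq_nth Htr Hrefl set0 Hsorted) Hij.
exists s; split => //.
  by move=> F; rewrite Hmem facet_iff.
move=> i k Hik Hks.
have Hi' : i < size s := ltn_trans Hik Hks.
have HTi : isF E R (nth set0 s i) by apply/Hmem; exact: mem_nth.
have HTk : isF E R (nth set0 s k) by apply/Hmem; exact: mem_nth.
have Hne : nth set0 s i != nth set0 s k by rewrite nth_uniq // neq_ltn Hik.
have Hkey := Hle i k Hi' Hks (ltnW Hik).
have [v [HvR Hpv HT' HkT']] := main_exch HTi HTk Hne Hkey.
set T' := (_ :|: _) in HT' HkT'.
have HT's : T' \in s by apply/Hmem.
exists (index T' s); split.
  rewrite ltnNge; apply/negP => Hkj.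
  have Hjs : index T' s < size s by rewrite index_mem.
  by have := Hle k (index T' s) Hks Hjs Hkj; rewrite nth_index // leqNgt HkT'.
exists (par (nth set0 s k) v, v); rewrite nth_index //; split.
- exact: notR_in HTk HvR.
- apply/subsetP => x; rewrite !inE => /andP [xi xk]; rewrite ?xk ?andbT.
  apply/orP; left; apply/eqP => Ex; subst x.
  by move: Hpv; rewrite (par_eq HTi xi) eqxx.
- have Hn : (par (nth set0 s i) v, v) \notin nth set0 s k.
    by apply/negP => /(par_eq HTk) Ep; move: Hpv; rewrite Ep eqxx.
  apply/setP => x; rewrite !inE.
  case: (eqVneq x (par (nth set0 s i) v, v)) => [->|_].
    by rewrite (negbTE Hn) !andbF.
  by rewrite orbF -andbA andbb.
Qed.
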